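(* Let $Q$ be a finite connected quandle, $e\in Q$, and let $K_1,K_2$ be oriented knots. If there is a knot $P$ such that $\mathrm{Col}_Q(K_1\# P)\neq \mathrm{Col}_Q(K_2\# P)$, then $\Psi^e_Q(K_1)\neq\Psi^e_Q(K_2)$.
   Context: A quandle is a set $Q$ with operation $*$ satisfying $a*a=a$; unique right division ($\forall b,c\ \exists! a: a*b=c$); and $(a*b)*c=(a*c)*(b*c)$. $R_a(x)=x*a$; $\mathrm{Inn}(Q)$ is the group generated by the $R_a$; $Q$ is connected if $\mathrm{Inn}(Q)$ is transitive on $Q$. A coloring of an oriented knot or tangle diagram by $Q$ assigns elements of $Q$ to arcs so that at each crossing with over-arc color $y$ and incoming under-arc color $x$ (standard sign convention) the other under-arc has color $x*y$. $\mathrm{Col}_Q(K)$ is the number of colorings of a diagram of $K$ by $Q$; $K_1\#P$ is the connected sum. A $1$-tangle is a properly embedded oriented arc in a $3$-ball up to isotopy rel boundary, drawn oriented top to bottom with top arc $b_0$ and bottom arc $b_1$; its closure joins the ends by a trivial arc; every knot $K$ is the closure of a $1$-tangle $T$, unique up to isotopy (end arcs need not have equal colors). For $e\in Q$, $\mathrm{Col}^e_Q(T)$ is the set of colorings $C$ of $T$ with $C(b_0)=e$, and $\Psi^e_Q(K)=\sum_{C\in \mathrm{Col}^e_Q(T)} C(b_1)$, an element of the free $\mathbb{Z}$-module with basis $F_e=\{b\in Q: R_b=R_e\}$. *)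

(* Defs.v *)
From mathcomp Require Import all_boot all_order all_fingroup all_algebra.
Set Implicit Arguments. Unset Strict Implicit. Unset Printing Implicit Defensive.

Record quandle := Quandle {
  qT :> finType;
  qop : qT -> qT -> qT;
  qidem : forall a, qop a a = a;
  qdiv : forall b c, exists! a, qop a b = c;
  qdist : forall a b c, qop (qop a b) c = qop (qop a c) (qop b c) }.

Lemma R_inj (Q : quandle) (a : Q) : injective (fun x : Q => qop x a).
Proof.
move=> x y H; have [a' [_ U]] := qdiv a (qop x a).
by rewrite -(U x erefl) (U y (esym H)).
Qed.

Definition Rq (Q : quandle) (a : Q) : {perm Q} := perm (@R_inj Q a).

Definition Inn (Q : quandle) : {set {perm Q}} := <<[set Rq a | a : Q]>>%g.

Definition connected (Q : quandle) : Prop := [transitive Inn Q, on [set: Q] | 'P].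

(** * Knots as closed braid diagrams
   A braid word on n.+1 strands is a sequence of generators (i, s) with
   i : 'I_n; (i, true) is sigma_i, (i, false) is sigma_i^{-1}; the word is
   read top to bottom, all strands oriented downwards. *)
Definition braid (n : nat) := seq ('I_n * bool).

Definition posL n (i : 'I_n) : 'I_n.+1 := widen_ord (leqnSn n) i.
Definition posR n (i : 'I_n) : 'I_n.+1 := lift ord0 i.

(** Colour change across one generator: colours (a, b) at positions
   (i, i+1) above the crossing become, below it,
   sigma_i      : (b, a * b)          (strand i passes under strand i+1),
   sigma_i^{-1} : (b /a, a)           (strand i+1 passes under strand i),
   where b /a is the unique y with y * a = b. *)
Definition gen_act (Q : quandle) n (g : 'I_n * bool) (x : {ffun 'I_n.+1 -> Q})
  : {ffun 'I_n.+1 -> Q} :=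
  let l := posL g.1 in let r := posR g.1 in
  let a := x l in let b := x r in
  [ffun j => if j == l then (if g.2 then b else ((Rq a)^-1)%g b)
             else if j == r then (if g.2 then qop a b else a)
             else x j].

Definition bact (Q : quandle) n (w : braid n) (x : {ffun 'I_n.+1 -> Q}) :=
  foldl (fun y g => gen_act g y) x w.

Definition tswap n (g : 'I_n * bool) (j : 'I_n.+1) : 'I_n.+1 :=
  if j == posL g.1 then posR g.1 else if j == posR g.1 then posL g.1 else j.
Definition bperm n (w : braid n) (j : 'I_n.+1) : 'I_n.+1 :=
  foldl (fun k g => tswap g k) j w.

Definition is_knot n (w : braid n) : bool :=
  [forall j : 'I_n.+1, fconnect (bperm w) ord0 j].

(** Col_Q(closure of w): colourings of the closed braid diagram
   = top colour vectors fixed by the braid action. *)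
Definition Col (Q : quandle) n (w : braid n) : nat :=
  #|[set x : {ffun 'I_n.+1 -> Q} | bact w x == x]|.

(** Connected sum of the closures: w2 is shifted so that its first strand is
   the last strand of w1. *)
Definition csum n1 n2 (w1 : braid n1) (w2 : braid n2) : braid (n1 + n2) :=
  [seq (lshift n2 g.1, g.2) | g <- w1] ++ [seq (rshift n1 g.1, g.2) | g <- w2].

(** Psi^e_Q: the 1-tangle T is the closure of w cut at the top of strand 0;
   b0 = top arc of strand 0, b1 = bottom arc of strand 0.  A colouring of T
   is a top colour vector x with x(0) = b0's colour whose image under the
   braid agrees with x on strands 1..n; its b1 colour is (bact w x)(0).
   The formal sum  sum_C C(b1)  is recorded by its coefficient function
   b |-> #{C : C(b1) = b}. *)
Definition tangle_col (Q : quandle) n (w : braid n) (e : Q) :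
  {set {ffun 'I_n.+1 -> Q}} :=
  [set x : {ffun 'I_n.+1 -> Q} | (x ord0 == e) && [forall j : 'I_n.+1, (j != ord0) ==> (bact w x j == x j)]].

Definition Psi (Q : quandle) (e : Q) n (w : braid n) : {ffun Q -> int} :=
  [ffun b => Posz #|[set x in tangle_col w e | bact w x ord0 == b]|].

(* Main.v *)
Require Import Defs.
From mathcomp Require Import all_boot all_order all_fingroup all_algebra.
From mathcomp Require Import zify.
Set Implicit Arguments. Unset Strict Implicit. Unset Printing Implicit Defensive.


Lemma RqE (Q : quandle) (a x : Q) : Rq a x = qop x a.
Proof. by rewrite /Rq permE. Qed.

Definition AutS (Q : quandle) : {set {perm Q}} :=
  [set f : {perm Q} | [forall a, [forall b, f (qop a b) == qop (f a) (f b)]]].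

Lemma AutSP (Q : quandle) (f : {perm Q}) :
  reflect (forall a b, f (qop a b) = qop (f a) (f b)) (f \in AutS Q).
Proof.
rewrite inE; apply: (iffP forallP) => H.
  by move=> a b; apply/eqP; have /forallP := H a; apply.
by move=> a; apply/forallP => b; apply/eqP.
Qed.

Lemma AutS_group_set (Q : quandle) : group_set (AutS Q).
Proof.
apply/group_setP; split.
  by apply/AutSP => a b; rewrite !perm1.
move=> f g /AutSP Hf /AutSP Hg; apply/AutSP => a b.
by rewrite !permM Hf Hg.
Qed.

Canonical AutG (Q : quandle) := Group (AutS_group_set Q).

Lemma Rq_Aut (Q : quandle) (a : Q) : Rq a \in AutS Q.
Proof. by apply/AutSP => x y; rewrite !RqE qdist. Qed.

Lemma Inn_Aut (Q : quandle) : Inn Q \subset AutS Q.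
Proof.
rewrite /Inn (gen_subG _ (AutG Q)); apply/subsetP => f /imsetP [a _ ->].
exact: Rq_Aut.
Qed.

Lemma RqV_Aut (Q : quandle) (a : Q) : (Rq a)^-1%g \in AutS Q.
Proof. by rewrite (groupV (AutG Q)) Rq_Aut. Qed.

Lemma Aut_RqV (Q : quandle) (f : {perm Q}) a b : f \in AutS Q ->
  ((Rq (f a))^-1)%g (f b) = f (((Rq a)^-1)%g b).
Proof.
move=> /AutSP Hf; apply: (@perm_inj _ (Rq (f a))).
by rewrite permKV RqE -Hf -RqE permKV.
Qed.

Definition qmap (Q : quandle) n (f : {perm Q}) (x : {ffun 'I_n.+1 -> Q}) :
  {ffun 'I_n.+1 -> Q} := [ffun i => f (x i)].

Lemma qmap_inj (Q : quandle) n (f : {perm Q}) : injective (@qmap Q n f).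
Proof.
move=> x y H; apply/ffunP => i; apply: (@perm_inj _ f).
by move/ffunP: H => /(_ i); rewrite !ffunE.
Qed.

Lemma gen_act_qmap (Q : quandle) n (g : 'I_n * bool) f (x : {ffun 'I_n.+1 -> Q}) :
  f \in AutS Q -> gen_act g (qmap f x) = qmap f (gen_act g x).
Proof.
move=> Hf; have := Hf => /AutSP Hf'.
apply/ffunP => j; rewrite !ffunE.
case: (j == _); first by case: g.2 => //; rewrite Aut_RqV.
case: (j == _) => //; case: g.2 => //; rewrite Hf' //.
Qed.

Lemma bact_qmap (Q : quandle) n (w : braid n) f (x : {ffun 'I_n.+1 -> Q}) :
  f \in AutS Q -> bact w (qmap f x) = qmap f (bact w x).
Proof.
move=> Hf; rewrite /bact; elim: w x => [|g w IH] x //=.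
by rewrite gen_act_qmap // IH.
Qed.

Definition gen_inv n (g : 'I_n * bool) : 'I_n * bool := (g.1, ~~ g.2).

Lemma posLR n (i : 'I_n) : (posL i == posR i) = false.
Proof. by apply/negbTE; rewrite -val_eqE /= /bump leq0n ltn_eqF. Qed.

Lemma posRL n (i : 'I_n) : (posR i == posL i) = false.
Proof. by rewrite eq_sym posLR. Qed.

Lemma gen_actK (Q : quandle) n (g : 'I_n * bool) :
  cancel (@gen_act Q n g) (gen_act (gen_inv g)).
Proof.
case: g => i s x; apply/ffunP => j; rewrite /gen_inv /=.
rewrite !ffunE /= !eqxx posRL.
case: ifP => [/eqP->|Hl].
  by case: s => /=; rewrite ?RqE -?RqE ?permK ?permKV.
case: ifP => [/eqP->|Hr]; last by rewrite Hl Hr.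
by case: s => /=; rewrite -?RqE ?permK ?permKV.
Qed.

Lemma gen_act_inj (Q : quandle) n (g : 'I_n * bool) : injective (@gen_act Q n g).
Proof. exact: can_inj (@gen_actK Q n g). Qed.


Definition PA (Q : quandle) n (x : {ffun 'I_n.+1 -> Q}) (a b : nat) : {perm Q} :=
  (\prod_(a <= k < b) Rq (x (inord k)))%g.

Definition Pi (Q : quandle) n (x : {ffun 'I_n.+1 -> Q}) := PA x 0 n.+1.

Lemma PA_cat (Q : quandle) n (x : {ffun 'I_n.+1 -> Q}) a b c :
  a <= b -> b <= c -> PA x a c = (PA x a b * PA x b c)%g.
Proof. by move=> h1 h2; rewrite /PA (big_cat_nat h1 h2). Qed.

Lemma PA_cons (Q : quandle) n (x : {ffun 'I_n.+1 -> Q}) a b :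
  a < b -> PA x a b = (Rq (x (inord a)) * PA x a.+1 b)%g.
Proof. by move=> h; rewrite /PA big_ltn. Qed.

Lemma PA_eq (Q : quandle) n (x y : {ffun 'I_n.+1 -> Q}) a b :
  (forall k, a <= k < b -> x (inord k) = y (inord k)) -> PA x a b = PA y a b.
Proof. by move=> H; apply: eq_big_nat => k /H ->. Qed.

Lemma Pi_split1 (Q : quandle) n (x : {ffun 'I_n.+1 -> Q}) (j : 'I_n.+1) :
  Pi x = (PA x 0 j * (Rq (x j) * PA x j.+1 n.+1))%g.
Proof.
rewrite /Pi (@PA_cat _ _ _ 0 j) ?leq0n 1?ltnW // (@PA_cons _ _ _ j) //.
by rewrite inord_val.
Qed.

Lemma Pi_split2 (Q : quandle) n (x : {ffun 'I_n.+1 -> Q}) (i : 'I_n) :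
  Pi x = (PA x 0 i * (Rq (x (posL i)) * (Rq (x (posR i)) * PA x i.+2 n.+1)))%g.
Proof.
have hi : i < n := ltn_ord i.
have hi1 : i < n.+1 by apply: ltnW.
have hi2 : i <= n.+1 by apply: ltnW.
rewrite /Pi (@PA_cat _ _ _ 0 i) ?leq0n //.
rewrite (@PA_cons _ _ _ i) // (@PA_cons _ _ _ i.+1) //.
have -> : (inord i : 'I_n.+1) = posL i by apply: val_inj; rewrite /= inordK.
by have -> : (inord i.+1 : 'I_n.+1) = posR i by apply: val_inj; rewrite /= inordK.
Qed.

Lemma Pi_gen (Q : quandle) n (g : 'I_n * bool) (x : {ffun 'I_n.+1 -> Q}) :
  Pi (gen_act g x) = Pi x.
Proof.
case: g => i s.
have hi : i < n := ltn_ord i.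
rewrite !(Pi_split2 _ i).
have nl : forall k, k < n.+1 -> k != i -> (inord k : 'I_n.+1) != posL i.
  by move=> k hk; apply: contra => /eqP/(congr1 val); rewrite /= inordK // => ->.
have nr : forall k, k < n.+1 -> k != i.+1 -> (inord k : 'I_n.+1) != posR i.
  by move=> k hk; apply: contra => /eqP/(congr1 val); rewrite /= inordK // => ->.
rewrite (@PA_eq _ _ (gen_act (i, s) x) x).
  rewrite (@PA_eq _ _ (gen_act (i, s) x) x i.+2).
    rewrite !ffunE !eqxx posRL /=.
    congr (_ * _)%g; rewrite !mulgA; congr (_ * _)%g.
    apply/permP => z; rewrite !permM.
    case: s; rewrite !RqE; first by rewrite [in RHS]qdist.
    by rewrite qdist -(RqE (x (posL i)) ((Rq (x (posL i)))^-1%g (x (posR i)))) permKV.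
  move=> k /andP [h1 h2]; rewrite ffunE.
  rewrite (negbTE (nl k h2 _)); last by rewrite neq_ltn (ltn_trans (ltnSn i) h1) orbT.
  by rewrite (negbTE (nr k h2 _)) // neq_ltn h1 orbT.
move=> k /andP [_ h2].
have hk : k < n.+1 := leq_trans h2 (leqW (ltnW hi)).
rewrite ffunE (negbTE (nl k hk _)); last by rewrite neq_ltn h2.
by rewrite (negbTE (nr k hk _)) // neq_ltn (ltn_trans h2 (ltnSn i)).
Qed.

Lemma Pi_bact (Q : quandle) n (w : braid n) (x : {ffun 'I_n.+1 -> Q}) :
  Pi (bact w x) = Pi x.
Proof. rewrite /bact; elim: w x => [|g w IH] x //=; by rewrite IH Pi_gen. Qed.

Definition req (Q : quandle) (a b : Q) := forall z, qop z a = qop z b.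

Lemma Pi_req (Q : quandle) n (x y : {ffun 'I_n.+1 -> Q}) (j : 'I_n.+1) :
  (forall k, k != j -> y k = x k) -> Pi x = Pi y -> req (x j) (y j).
Proof.
move=> H; rewrite !(Pi_split1 _ j).
have hj : j < n.+1 := ltn_ord j.
have E1 : PA x 0 j = PA y 0 j.
  apply: PA_eq => k /andP [_ h2]; rewrite H //.
  apply/eqP => /(congr1 val); rewrite /= inordK; last exact: ltn_trans h2 hj.
  by move=> ek; move: h2; rewrite ek ltnn.
have E2 : PA x j.+1 n.+1 = PA y j.+1 n.+1.
  apply: PA_eq => k /andP [h1 h2]; rewrite H //.
  apply/eqP => /(congr1 val); rewrite /= inordK //.
  by move=> ek; move: h1; rewrite ek ltnn.
rewrite E1 E2 => /mulgI /mulIg /permP R z.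
by have := R z; rewrite !RqE.
Qed.


Definition hinv (Q : quandle) (h : Q -> Q -> nat) :=
  forall f, f \in AutS Q -> forall a b, h (f a) (f b) = h a b.

Lemma req_Rq (Q : quandle) (a b : Q) : req a b -> Rq a = Rq b.
Proof. by move=> H; apply/permP => z; rewrite !RqE. Qed.

Lemma step (Q : quandle) n (i : 'I_n) s (x y : {ffun 'I_n.+1 -> Q}) j h :
  hinv h -> (forall k, k != j -> y k = x k) -> req (x j) (y j) ->
  (forall k, k != tswap (i,s) j -> gen_act (i,s) y k = gen_act (i,s) x k) /\
  h (gen_act (i,s) x (tswap (i,s) j)) (gen_act (i,s) y (tswap (i,s) j)) = h (x j) (y j).
Proof.
move=> hh H R; rewrite /tswap /=.
case: (eqVneq j (posL i)) => [E|jl].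
  subst j; have er : y (posR i) = x (posR i) by rewrite H // posRL.
  split.
    move=> k kr; rewrite !ffunE (negbTE kr).
    case: ifP => [_|kk]; last by rewrite H // kk.
    by case: s; rewrite er // (req_Rq R).
  rewrite !ffunE posRL eqxx; case: s => //.
  by rewrite er -!RqE hh // Rq_Aut.
case: (eqVneq j (posR i)) => [E|jr].
  subst j; have el : y (posL i) = x (posL i) by rewrite H // posLR.
  split.
    move=> k kl; rewrite !ffunE (negbTE kl).
    case: ifP => [_|kk]; last by rewrite H // kk.
    by case: s; rewrite el // R.
  rewrite !ffunE eqxx; case: s => //.
  by rewrite el hh // RqV_Aut.
have el : y (posL i) = x (posL i) by rewrite H // eq_sym.
have er : y (posR i) = x (posR i) by rewrite H // eq_sym.
split.
  move=> k kj; rewrite !ffunE el er.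
  by case: ifP => _ //; case: ifP => _ //; rewrite H.
by rewrite !ffunE (negbTE jl) (negbTE jr).
Qed.

Definition S (Q : quandle) n (w : braid n) (j : 'I_n.+1) : {set {ffun 'I_n.+1 -> Q}} :=
  [set x | [forall k, (k != j) ==> (bact w x k == x k)]].

Definition G (Q : quandle) n (w : braid n) (j : 'I_n.+1) (h : Q -> Q -> nat) :=
  \sum_(x in S Q w j) h (x j) (bact w x j).

Lemma inSP (Q : quandle) n (w : braid n) j (x : {ffun 'I_n.+1 -> Q}) :
  reflect (forall k, k != j -> bact w x k = x k) (x \in S Q w j).
Proof.
rewrite inE; apply: (iffP forallP) => H k.
  by move=> kj; have := H k; rewrite kj => /eqP.
by apply/implyP => /H ->.
Qed.

Lemma tswapK n (g : 'I_n * bool) : involutive (tswap g).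
Proof.
move=> j; rewrite /tswap.
case: (eqVneq j (posL g.1)) => [->|jl]; first by rewrite posRL eqxx.
case: (eqVneq j (posR g.1)) => [->|jr]; first by rewrite eqxx.
by rewrite (negbTE jl) (negbTE jr).
Qed.

Lemma step_S (Q : quandle) n (g : 'I_n * bool) (u : braid n) (x : {ffun 'I_n.+1 -> Q}) j h :
  hinv h -> x \in S Q (g :: u) j ->
  gen_act g x \in S Q (rcons u g) (tswap g j) /\
  h (gen_act g x (tswap g j)) (bact (rcons u g) (gen_act g x) (tswap g j)) =
  h (x j) (bact (g :: u) x j).
Proof.
case: g => i s hh /inSP H.
have R : req (x j) (bact ((i, s) :: u) x j).
  by apply: Pi_req => //; rewrite Pi_bact.
have [A B] := step i s hh H R.
split; last by rewrite /bact foldl_rcons.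
apply/inSP => k /A; rewrite /bact foldl_rcons /= => ->.
by [].
Qed.

Lemma rot (Q : quandle) n (g : 'I_n * bool) (u : braid n) (j : 'I_n.+1) (h : Q -> Q -> nat) :
  hinv h -> G (g :: u) j h = G (rcons u g) (tswap g j) h.
Proof.
move=> hh; rewrite /G [RHS](reindex_inj (@gen_act_inj Q n g)).
apply: eq_big => x; last by move=> xS; have [_ ->] := step_S hh xS.
apply/idP/idP; first by move=> xS; have [-> _] := step_S hh xS.
move=> /inSP H.
have R : req (gen_act g x (tswap g j)) (bact (rcons u g) (gen_act g x) (tswap g j)).
  by apply: Pi_req => //; rewrite Pi_bact.
case: g H R => i s H R.
have [A _] := step i (~~ s) hh H R.
apply/inSP => k kj.
move: (A k); rewrite tswapK => /(_ kj).
have K := @gen_actK Q n (i, s); rewrite /gen_inv /= in K.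
by rewrite /bact foldl_rcons /= !K.
Qed.

Lemma rot_cat (Q : quandle) n (p s : braid n) (j : 'I_n.+1) (h : Q -> Q -> nat) :
  hinv h -> G (p ++ s) j h = G (s ++ p) (bperm p j) h.
Proof.
move=> hh; elim: p s j => [|g p IH] s j /=; first by rewrite cats0.
by rewrite rot // rcons_cat IH cat_rcons.
Qed.

Lemma G_knot (Q : quandle) n (w : braid n) (j : 'I_n.+1) (h : Q -> Q -> nat) :
  hinv h -> is_knot w -> G w j h = G w ord0 h.
Proof.
move=> hh /forallP /(_ j) /iter_findex <-.
elim: (findex _ _ _) => [|k IH] //=.
by have := rot_cat w [::] (iter k (bperm w) ord0) hh; rewrite cats0 /= => <-.
Qed.


Lemma S_qmap (Q : quandle) n (w : braid n) j (f : {perm Q}) (x : {ffun 'I_n.+1 -> Q}) :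
  f \in AutS Q -> (qmap f x \in S Q w j) = (x \in S Q w j).
Proof.
move=> hf; apply/inSP/inSP => H k kj; have := H k kj.
  by rewrite bact_qmap // !ffunE => /perm_inj.
by rewrite bact_qmap // !ffunE => ->.
Qed.

Lemma conn_orbit (Q : quandle) (e c : Q) : connected Q ->
  exists2 f : {perm Q}, f \in AutS Q & f e = c.
Proof.
move=> H; have := atransP H e (in_setT e) => E.
have : c \in orbit 'P (Inn Q) e by rewrite E in_setT.
case/orbitP => f fI <-; exists f =>//.
by apply: (subsetP (Inn_Aut Q)).
Qed.

Definition T (Q : quandle) (e : Q) n (w : braid n) (h : Q -> Q -> nat) :=
  \sum_(x in tangle_col w e) h e (bact w x ord0).

Lemma G0_T (Q : quandle) (e : Q) n (w : braid n) (h : Q -> Q -> nat) :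
  connected Q -> hinv h -> G w ord0 h = \sum_(c : Q) T e w h.
Proof.
move=> cQ hh; rewrite /G (partition_big (fun x : {ffun 'I_n.+1 -> Q} => x ord0) (fun _ : Q => true)) //=.
apply: eq_bigr => c _.
have [f fA fe] := conn_orbit e c cQ.
rewrite (reindex_inj (@qmap_inj Q n f)) /T.
apply: eq_big => x.
  rewrite S_qmap // ffunE -fe (inj_eq (@perm_inj _ f)) inE andbC.
  by rewrite /S inE.
move=> /andP [_ /eqP]; rewrite ffunE -fe => /perm_inj xe.
by rewrite bact_qmap // !ffunE hh // xe.
Qed.

Lemma T_cnt (Q : quandle) (e : Q) n (w : braid n) (h : Q -> Q -> nat) :
  T e w h = \sum_(b : Q) #|[set x in tangle_col w e | bact w x ord0 == b]| * h e b.
Proof.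
rewrite /T (partition_big (fun x : {ffun 'I_n.+1 -> Q} => bact w x ord0) (fun _ : Q => true)) //=.
apply: eq_bigr => b _.
rewrite -sum_nat_const; apply: eq_big => x; first by rewrite !inE.
by move=> /andP [_ /eqP ->].
Qed.


Definition lft (Q : quandle) n1 m (x : {ffun 'I_(n1 + m).+1 -> Q}) : {ffun 'I_n1.+1 -> Q} :=
  [ffun k : 'I_n1.+1 => x (inord k)].
Definition rgt (Q : quandle) n1 m (x : {ffun 'I_(n1 + m).+1 -> Q}) : {ffun 'I_m.+1 -> Q} :=
  [ffun k : 'I_m.+1 => x (inord (n1 + k))].

Lemma eq_inord N a (p : 'I_N.+1) : a < N.+1 -> (inord a == p) = (a == val p).
Proof. by move=> h; rewrite -val_eqE /= inordK. Qed.

Lemma valL n (i : 'I_n) : val (posL i) = val i. Proof. by []. Qed.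
Lemma bump0 i : bump 0 i = i.+1.
Proof. by rewrite /bump leq0n add1n. Qed.
Lemma valR n (i : 'I_n) : val (posR i) = (val i).+1.
Proof. by rewrite /= /bump leq0n add1n. Qed.

Lemma gen_lsh (Q : quandle) n1 m (i : 'I_n1) s (x : {ffun 'I_(n1 + m).+1 -> Q}) :
  lft (gen_act (lshift m i, s) x) = gen_act (i, s) (lft x).
Proof.
have hi := ltn_ord i.
have EL : posL (lshift m i) = inord (posL i) :> 'I_(n1 + m).+1.
  by apply: val_inj; rewrite /= inordK //; lia.
have ER : posR (lshift m i) = inord (posR i) :> 'I_(n1 + m).+1.
  by apply: val_inj; rewrite /= !bump0 inordK //; lia.
apply/ffunP => k; have hk := ltn_ord k.
rewrite !ffunE /= EL ER !eq_inord /= ?bump0; try lia.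
rewrite !inordK; try lia.
by rewrite -[k == posL i]val_eqE -[k == posR i]val_eqE /= bump0.
Qed.

Lemma gen_lsh_r (Q : quandle) n1 m (i : 'I_n1) s (x : {ffun 'I_(n1 + m).+1 -> Q}) (k : 'I_m.+1) :
  k != ord0 -> rgt (gen_act (lshift m i, s) x) k = rgt x k.
Proof.
move=> k0; have hi := ltn_ord i; have hk := ltn_ord k.
have k1 : 0 < k by rewrite lt0n; apply: contra k0 => /eqP k0; apply/eqP/val_inj.
have EL : posL (lshift m i) = inord (posL i) :> 'I_(n1 + m).+1.
  by apply: val_inj; rewrite /= inordK //; lia.
have ER : posR (lshift m i) = inord (posR i) :> 'I_(n1 + m).+1.
  by apply: val_inj; rewrite /= !bump0 inordK //; lia.
rewrite !ffunE /= EL ER !eq_inord /= ?bump0; try lia.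
rewrite !inordK; try lia.
case: eqP => [?|_]; first lia.
case: eqP => [?|_]; first lia.
by [].
Qed.

Lemma gen_rsh (Q : quandle) n1 m (i : 'I_m) s (x : {ffun 'I_(n1 + m).+1 -> Q}) :
  rgt (gen_act (rshift n1 i, s) x) = gen_act (i, s) (rgt x).
Proof.
have hi := ltn_ord i.
have EL : posL (rshift n1 i) = inord (n1 + posL i) :> 'I_(n1 + m).+1.
  by apply: val_inj; rewrite /= inordK //; lia.
have ER : posR (rshift n1 i) = inord (n1 + posR i) :> 'I_(n1 + m).+1.
  by apply: val_inj; rewrite /= !bump0 inordK //; lia.
apply/ffunP => k; have hk := ltn_ord k.
rewrite !ffunE /= EL ER !eq_inord /= ?bump0; try lia.
rewrite !inordK; try lia.
by rewrite !eqn_add2l -[k == posL i]val_eqE -[k == posR i]val_eqE /= bump0.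
Qed.

Lemma gen_rsh_l (Q : quandle) n1 m (i : 'I_m) s (x : {ffun 'I_(n1 + m).+1 -> Q}) (k : 'I_n1.+1) :
  k != ord_max -> lft (gen_act (rshift n1 i, s) x) k = lft x k.
Proof.
move=> k0; have hi := ltn_ord i; have hk := ltn_ord k.
have k1 : k < n1.
  rewrite ltn_neqAle -ltnS hk andbT; apply: contra k0 => /eqP k0; apply/eqP/val_inj.
  by rewrite /= k0.
have EL : posL (rshift n1 i) = inord (n1 + posL i) :> 'I_(n1 + m).+1.
  by apply: val_inj; rewrite /= inordK //; lia.
have ER : posR (rshift n1 i) = inord (n1 + posR i) :> 'I_(n1 + m).+1.
  by apply: val_inj; rewrite /= !bump0 inordK //; lia.
rewrite !ffunE /= EL ER !eq_inord /= ?bump0; try lia.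
rewrite !inordK; try lia.
case: eqP => [?|_]; first lia.
case: eqP => [?|_]; first lia.
by [].
Qed.


Definition shK n1 m (K : braid n1) : braid (n1 + m) := [seq (lshift m g.1, g.2) | g <- K].
Definition shP n1 m (P : braid m) : braid (n1 + m) := [seq (rshift n1 g.1, g.2) | g <- P].

Lemma bact_csum (Q : quandle) n1 m (K : braid n1) (P : braid m) (x : {ffun 'I_(n1 + m).+1 -> Q}) :
  bact (csum K P) x = bact (shP n1 P) (bact (shK m K) x).
Proof. by rewrite /bact /csum foldl_cat. Qed.

Lemma L1 (Q : quandle) n1 m (K : braid n1) (x : {ffun 'I_(n1 + m).+1 -> Q}) :
  lft (bact (shK m K) x) = bact K (lft x).
Proof.
rewrite /bact /shK; elim: K x => [|[i s] K IH] x //=.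
by rewrite IH gen_lsh.
Qed.

Lemma L2 (Q : quandle) n1 m (K : braid n1) (x : {ffun 'I_(n1 + m).+1 -> Q}) k :
  k != ord0 -> rgt (bact (shK m K) x) k = rgt x k.
Proof.
move=> k0; rewrite /bact /shK; elim: K x => [|[i s] K IH] x //=.
by rewrite IH gen_lsh_r.
Qed.

Lemma L3 (Q : quandle) n1 m (P : braid m) (x : {ffun 'I_(n1 + m).+1 -> Q}) :
  rgt (bact (shP n1 P) x) = bact P (rgt x).
Proof.
rewrite /bact /shP; elim: P x => [|[i s] P IH] x //=.
by rewrite IH gen_rsh.
Qed.

Lemma L4 (Q : quandle) n1 m (P : braid m) (x : {ffun 'I_(n1 + m).+1 -> Q}) k :
  k != ord_max -> lft (bact (shP n1 P) x) k = lft x k.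
Proof.
move=> k0; rewrite /bact /shP; elim: P x => [|[i s] P IH] x //=.
by rewrite IH gen_rsh_l.
Qed.

Lemma rgt0 (Q : quandle) n1 m (x : {ffun 'I_(n1 + m).+1 -> Q}) :
  rgt x ord0 = lft x ord_max.
Proof. by rewrite !ffunE /= addn0. Qed.

Lemma lr_inj (Q : quandle) n1 m (x x' : {ffun 'I_(n1 + m).+1 -> Q}) :
  lft x = lft x' -> rgt x = rgt x' -> x = x'.
Proof.
move=> El Er; apply/ffunP => q; have hq := ltn_ord q.
case: (leqP q n1) => hq1.
  have := congr1 (fun f : {ffun 'I_n1.+1 -> Q} => f (inord q)) El.
  by rewrite !ffunE inordK // inord_val.
have := congr1 (fun f : {ffun 'I_m.+1 -> Q} => f (inord (q - n1))) Er.
rewrite !ffunE inordK; last by lia.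
have -> : n1 + (q - n1) = q by lia.
by rewrite inord_val.
Qed.


Definition vp (Q : quandle) n1 m (K : braid n1) (x : {ffun 'I_(n1 + m).+1 -> Q}) :
  {ffun 'I_m.+1 -> Q} :=
  [ffun k : 'I_m.+1 => if k == ord0 then bact K (lft x) ord_max else rgt x k].

Definition Bp (Q : quandle) n1 m (K : braid n1) (P : braid m)
  (p : {ffun 'I_n1.+1 -> Q} * {ffun 'I_m.+1 -> Q}) : bool :=
  [&& p.1 \in S Q K ord_max, p.2 \in S Q P ord0,
              p.2 ord0 == bact K p.1 ord_max & bact P p.2 ord0 == p.1 ord_max].
Definition Bset (Q : quandle) n1 m (K : braid n1) (P : braid m) :
  {set {ffun 'I_n1.+1 -> Q} * {ffun 'I_m.+1 -> Q}} := [set p | Bp K P p].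

Lemma fixed_iff (Q : quandle) n1 m (K : braid n1) (P : braid m) (x : {ffun 'I_(n1 + m).+1 -> Q}) :
  (bact (csum K P) x == x) = Bp K P (lft x, vp K x).
Proof.
rewrite bact_csum /Bp /=.
set y := bact (shK m K) x; set z := bact (shP n1 P) y.
have ly : lft y = bact K (lft x) by rewrite L1.
have ry : rgt y = vp K x.
  apply/ffunP => k; rewrite [in RHS]ffunE.
  case: (eqVneq k ord0) => [->|k0]; first by rewrite rgt0 ly.
  by rewrite L2.
have rz : rgt z = bact P (vp K x) by rewrite L3 ry.
have lz : forall k, k != ord_max -> lft z k = bact K (lft x) k.
  by move=> k km; rewrite L4 // ly.
have lzm : lft z ord_max = bact P (vp K x) ord0 by rewrite -rgt0 rz.
have v0 : vp K x ord0 = bact K (lft x) ord_max by rewrite ffunE eqxx.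
rewrite v0 eqxx /=.
apply/eqP/idP.
  move=> E; apply/and3P; split.
  - by apply/inSP => k km; rewrite -lz // E.
  - apply/inSP => k k0; rewrite -rz.
    by rewrite [in RHS]ffunE (negbTE k0) E.
  - by rewrite -lzm E.
case/and3P => /inSP H1 /inSP H2 /eqP H3.
apply: lr_inj.
  apply/ffunP => k; case: (eqVneq k ord_max) => [->|km]; first by rewrite lzm H3.
  by rewrite lz // H1.
apply/ffunP => k; rewrite rz; case: (eqVneq k ord0) => [->|k0].
  by rewrite H3 rgt0.
by rewrite H2 // ffunE (negbTE k0).
Qed.

Definition hP (Q : quandle) m (P : braid m) (c d : Q) : nat :=
  #|[set v : {ffun 'I_m.+1 -> Q} | [&& v \in S Q P ord0, v ord0 == d & bact P v ord0 == c]]|.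

Lemma hP_inv (Q : quandle) m (P : braid m) : hinv (@hP Q m P).
Proof.
move=> f fA c d; rewrite /hP -(card_preimset _ (@qmap_inj Q m f)).
apply: eq_card => v; have := S_qmap P ord0 v fA; rewrite !inE => ->.
by rewrite bact_qmap // !ffunE !(inj_eq (@perm_inj _ f)).
Qed.

Definition glue (Q : quandle) n1 m (p : {ffun 'I_n1.+1 -> Q} * {ffun 'I_m.+1 -> Q}) :
  {ffun 'I_(n1 + m).+1 -> Q} :=
  [ffun q : 'I_(n1 + m).+1 => if q <= n1 then p.1 (inord q) else p.2 (inord (q - n1))].

Lemma lft_glue (Q : quandle) n1 m (p : {ffun 'I_n1.+1 -> Q} * {ffun 'I_m.+1 -> Q}) :
  lft (glue p) = p.1.
Proof.
apply/ffunP => k; have hk := ltn_ord k.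
rewrite !ffunE inordK; last by lia.
by rewrite -ltnS hk inord_val.
Qed.

Lemma rgt_glue (Q : quandle) n1 m (p : {ffun 'I_n1.+1 -> Q} * {ffun 'I_m.+1 -> Q}) k :
  k != ord0 -> rgt (glue p) k = p.2 k.
Proof.
move=> k0; have hk := ltn_ord k.
have k1 : 0 < k by rewrite lt0n; apply: contra k0 => /eqP k0; apply/eqP/val_inj.
rewrite !ffunE inordK; last by lia.
have -> : (n1 + k <= n1) = false by lia.
have -> : n1 + k - n1 = k by lia.
by rewrite inord_val.
Qed.

Lemma Col_G (Q : quandle) n1 m (K : braid n1) (P : braid m) :
  Col Q (csum K P) = G K ord_max (@hP Q m P).
Proof.
pose F (x : {ffun 'I_(n1 + m).+1 -> Q}) := (lft x, vp K x).
have Finj : injective F.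
  move=> x x' [El Ev]; apply: lr_inj => //.
  apply/ffunP => k; case: (eqVneq k ord0) => [->|k0]; first by rewrite !rgt0 El.
  have := congr1 (fun f : {ffun 'I_m.+1 -> Q} => f k) Ev.
  by rewrite !ffunE (negbTE k0).
have E1 : [set x | bact (csum K P) x == x] = F @^-1: Bset Q K P.
  by apply/setP => x; rewrite !inE fixed_iff.
have E2 : F @: (F @^-1: Bset Q K P) = Bset Q K P.
  apply/setP => p; apply/imsetP/idP => [[x]|pB].
    by rewrite in_set => ? ->.
  have Fg : F (glue p) = p.
    move: pB; rewrite inE /Bp => /and4P [_ _ /eqP H _].
    rewrite /F lft_glue; case: p H => u v /= H; congr (_, _).
    apply/ffunP => k; rewrite ffunE; case: (eqVneq k ord0) => [->|k0].
      by rewrite lft_glue H.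
    by rewrite rgt_glue.
  by move: pB; rewrite inE => pB; exists (glue p); rewrite ?inE Fg.
rewrite /Col E1 -(card_imset _ Finj) E2.
rewrite /G /hP.
under eq_bigr do rewrite -sum1_card.
rewrite pair_big_dep -sum1_card; apply: eq_bigl => p.
rewrite /Bset in_set /Bp !inE. reflexivity.
Qed.

Unset Implicit Arguments. Set Strict Implicit.

Theorem mainTheorem2 (Q : quandle) (e : Q) (n1 n2 : nat)
    (K1 : braid n1) (K2 : braid n2) :
  connected Q -> is_knot K1 -> is_knot K2 ->
  (exists (m : nat) (P : braid m),
      is_knot P /\ Col Q (csum K1 P) <> Col Q (csum K2 P)) ->
  Psi e K1 <> Psi e K2.
Proof.
move=> cQ k1 k2 [m [P [_ hne]]] hPsi; apply: hne.
have hh := @hP_inv Q m P.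
rewrite !Col_G (G_knot ord_max hh k1) (G_knot ord_max hh k2).
rewrite (G0_T e K1 cQ hh) (G0_T e K2 cQ hh).
apply: eq_bigr => c _; rewrite !T_cnt; apply: eq_bigr => b _.
congr (_ * _)%N.
have := congr1 (fun f : {ffun Q -> int} => f b) hPsi; rewrite !ffunE.
by case.
Qed.
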